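(* Let $n\ge 2$ and let $\mathcal{A}$ be an antichain in $Q(P_n)$. Then there exists an antichain $\mathcal{A}'$ contained in \[ Q'(P_n)=\bigcup_{\frac{n-1}{4}<r<\frac{n+2}{3}} Q^{(r)}(P_n) \] with $|\mathcal{A}|\le|\mathcal{A}'|$.
   Context: $Q(P_n)$ is the family of subsets of $[n]=\{1,\dots,n\}$ containing no two consecutive integers, and $Q^{(r)}(P_n)$ its members of size $r$ (the union is over integers $r$). An antichain is a subfamily in which no member is a proper subset of another. *)

(* Defs.v *)
(* The ground set [n] = {1,...,n} is modelled by 'I_n
   (element k of 'I_n stands for k+1); consecutiveness is shift-invariant. *)
From mathcomp Require Import all_boot.
Set Implicit Arguments. Unset Strict Implicit. Unset Printing Implicit Defensive.

Definition noConsec (n : nat) (A : {set 'I_n}) : bool :=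
  [forall i : 'I_n, forall j : 'I_n, (i \in A) && (j \in A) ==> (val j != (val i).+1)].

Definition inQ (n : nat) (F : {set {set 'I_n}}) : bool :=
  [forall A in F, noConsec A].

(* Q'(P_n): members of Q(P_n) whose size r satisfies (n-1)/4 < r < (n+2)/3,
   i.e. n - 1 < 4 r and 3 r < n + 2 (over the integers; n >= 2 so n-1 is exact). *)
Definition inQ' (n : nat) (F : {set {set 'I_n}}) : bool :=
  [forall A in F, [&& noConsec A, n.-1 < 4 * #|A| & 3 * #|A| < n + 2]].

Definition antichain (T : finType) (F : {set {set T}}) : bool :=
  [forall A in F, forall B in F, ~~ (A \proper B)].

(* Main.v *)
Require Import Defs.
From mathcomp Require Import all_boot zify.
Set Implicit Arguments. Unset Strict Implicit. Unset Printing Implicit Defensive.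



Lemma card_sum (T : finType) (U : {set T}) (P : pred T) :
  #|[set b in U | P b]| = \sum_(b in U) (P b : nat).
Proof.
rewrite -sum1_card big_mkcond [RHS]big_mkcond /=.
by apply: eq_bigr => b _; rewrite !inE; case: (b \in U); case: (P b).
Qed.

Lemma dcount (T : finType) (G U : {set T}) (R : rel T) d e :
  (forall a, a \in G -> d <= #|[set b in U | R a b]|) ->
  (forall b, b \in U -> #|[set a in G | R a b]| <= e) ->
  #|G| * d <= #|U| * e.
Proof.
move=> H1 H2.
rewrite -!sum_nat_const.
apply: (@leq_trans (\sum_(a in G) \sum_(b in U) (R a b : nat))).
  apply: leq_sum => a aG; rewrite -card_sum; exact: H1.
rewrite exchange_big /=.
apply: leq_sum => b bU; rewrite -card_sum; exact: H2.
Qed.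

Lemma noConsecP m (A : {set 'I_m}) :
  reflect (forall i j, i \in A -> j \in A -> val j != (val i).+1) (noConsec A).
Proof.
apply: (iffP forallP) => [H i j Hi Hj | H i].
- by move/forallP: (H i) => /(_ j); rewrite Hi Hj.
- apply/forallP => j; apply/implyP => /andP[]; exact: H.
Qed.

Lemma noConsecN m (A : {set 'I_m}) :
  ~~ noConsec A -> exists i j, [/\ i \in A, j \in A & val j = (val i).+1].
Proof.
rewrite /noConsec negb_forall => /existsP[i]; rewrite negb_forall => /existsP[j].
rewrite negb_imply negbK => /andP[/andP[Hi Hj] /eqP Hij]; by exists i, j.
Qed.

Lemma noConsec_sub m (A B : {set 'I_m}) : A \subset B -> noConsec B -> noConsec A.
Proof. move=> sAB /noConsecP H; apply/noConsecP=> i j Hi Hj; apply: H; exact: (subsetP sAB). Qed.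

Ltac gen_cards := repeat match goal with |- context [#|?A|] => let c := fresh "c" in move: #|A| => c end.

Lemma oval m (i : 'I_m) : val i = nat_of_ord i. Proof. by []. Qed.

Definition addable m (A : {set 'I_m}) := [set x | (x \notin A) && noConsec (x |: A)].

Lemma card_union_le (T : finType) (A B : {set T}) : #|A :|: B| <= #|A| + #|B|.
Proof. by rewrite -cardsUI leq_addr. Qed.

Lemma addable_lb n (A : {set 'I_n.+1}) : noConsec A -> n.+1 <= #|addable A| + 3 * #|A|.
Proof.
move=> nA.
pose f1 := fun a : 'I_n.+1 => (inord (val a).+1 : 'I_n.+1).
pose f2 := fun a : 'I_n.+1 => (inord (val a).-1 : 'I_n.+1).
have sub : ~: addable A \subset A :|: f1 @: A :|: f2 @: A.
  apply/subsetP => x; rewrite !inE negb_and negbK.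
  case xA: (x \in A) => //= /noConsecN [i [j [Hi Hj Hij]]].
  move: Hi Hj; rewrite !in_setU1 => /orP[/eqP ix|iA] /orP[/eqP jx|jA].
  - by move: Hij; rewrite ix jx; lia.
  - apply/orP; right; apply/imsetP; exists j => //; apply: val_inj.
    rewrite /f2 /= inordK; move: (ltn_ord j) Hij; rewrite -?ix /=; lia.
  - apply/orP; left; apply/imsetP; exists i => //; apply: val_inj.
    rewrite /f1 /= inordK; move: (ltn_ord j) Hij; rewrite -?jx /=; lia.
  - by move/noConsecP: nA => /(_ i j iA jA); rewrite Hij eqxx.
have := subset_leq_card sub.
have := cardsC (addable A); rewrite card_ord.
have := card_union_le (A :|: f1 @: A) (f2 @: A).
have := card_union_le A (f1 @: A).
have := leq_imset_card f1 A.
have := leq_imset_card f2 A.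
move=> h1 h2 h3 h4 h5 h6; set a := #|A| in h1 h2 h3 *. set b := #|~: addable A| in h5 h6. set c1 := #|[set f1 x | x in A]| in h2 h3. set c2 := #|[set f2 x | x in A]| in h1 h4. set u := #|A :|: [set f1 x | x in A]| in h3 h4. set v := #|A :|: [set f1 x | x in A] :|: [set f2 x | x in A]| in h4 h6. clearbody a b c1 c2 u v. lia.
Qed.

Lemma addable_ub n (A : {set 'I_n}) (x0 : 'I_n) : noConsec A -> x0 \in addable A ->
  #|addable A| + 2 * #|A| <= n.
Proof.
move=> nA x0X.
pose w := fun a : 'I_n => widen_ord (leqnSn n) a.
pose s := fun a : 'I_n => (lift ord0 a : 'I_n.+1).
have winj : injective w by move=> a b /(congr1 val) /= /val_inj.
have sinj : injective s by move=> a b /(congr1 val) /=; rewrite /bump /=; case=> /val_inj.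
case: (arg_maxnP (fun i : 'I_n => val i) x0X) => x xX xmax.
have {}xX : x \in addable A := xX.
have {}xmax : forall j, j \in addable A -> val j <= val x := xmax.
set X := addable A in xX xmax *.
have xprop : forall a, a \in A -> val a <> (val x).+1.
  move=> a aA; move: xX; rewrite /X inE => /andP[_ /noConsecP H] E.
  by move: (H x a (setU11 _ _) (setU1r _ aA)); rewrite E eqxx.
have sub : w @: X :|: w @: A :|: s @: A \subset ~: [set s x].
  apply/subsetP => y; rewrite !inE => /orP[/orP[]|] /imsetP[a aS ->];
    apply/eqP => /(congr1 val) /=; rewrite /bump /= => E.
  - move: (xmax a aS) E; rewrite !oval; lia.
  - exact: xprop a aS E.
  - move: xX; rewrite inE => /andP[xA _]; move: E => [] /val_inj E.
    by move: xA; rewrite -E aS.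
have d12 : w @: X :&: w @: A = set0.
  apply/setP => y; rewrite !inE; apply/negbTE; apply/negP => /andP[/imsetP[a aX ->] /imsetP[b bA /winj E]].
  by move: aX; rewrite inE E bA.
have d3 : (w @: X :|: w @: A) :&: s @: A = set0.
  apply/setP => y; rewrite !inE; apply/negbTE; apply/negP => /andP[/orP[] /imsetP[a aS ->] /imsetP[b bA]]
   => /(congr1 val) /=; rewrite /bump /= => E.
  - move: aS; rewrite inE => /andP[_ /noConsecP H].
    by move: (H b a (setU1r _ bA) (setU11 _ _)) E; rewrite !oval; lia.
  - by move/noConsecP: nA => /(_ b a bA aS); move: E; rewrite !oval; lia.
have := subset_leq_card sub.
have := cardsC [set s x]; rewrite cards1 card_ord.
have := cardsUI (w @: X :|: w @: A) (s @: A); rewrite d3 cards0.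
have := cardsUI (w @: X) (w @: A); rewrite d12 cards0.
rewrite !card_imset //.
gen_cards; lia.
Qed.

Lemma inQP m (F : {set {set 'I_m}}) : reflect (forall A, A \in F -> noConsec A) (inQ F).
Proof. apply: (iffP forall_inP) => H A; exact: H. Qed.

Lemma antichainP (T : finType) (F : {set {set T}}) :
  reflect (forall X Y, X \in F -> Y \in F -> ~~ (X \proper Y)) (antichain F).
Proof.
apply: (iffP forall_inP) => [H X Y XF YF | H X XF].
- by move/forall_inP: (H X XF) => /(_ Y YF).
- apply/forall_inP => Y YF; exact: H.
Qed.

Lemma antichain_same (T : finType) (H : {set {set T}}) k :
  (forall X, X \in H -> #|X| = k) -> antichain H.
Proof.
move=> Hk; apply/antichainP => X Y XH YH; apply/negP => /proper_card.
by rewrite (Hk X XH) (Hk Y YH) ltnn.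
Qed.

Lemma replace m (F G H : {set {set 'I_m}}) :
 inQ F -> antichain F -> G \subset F -> inQ H -> antichain H ->
 (forall X Y, X \in F -> X \notin G -> Y \in H -> ~~ (X \proper Y) && ~~ (Y \proper X)) ->
 (forall Y, Y \in H -> Y \notin F) -> #|G| <= #|H| ->
 [/\ inQ ((F :\: G) :|: H), antichain ((F :\: G) :|: H) & #|F| <= #|(F :\: G) :|: H|].
Proof.
move=> /inQP QF /antichainP AF sGF /inQP QH /antichainP AH cross disj cGH; split.
- apply/inQP => A; rewrite !inE => /orP[/andP[_ AF']|AH']; [exact: QF | exact: QH].
- apply/antichainP => X Y; rewrite !inE => /orP[/andP[XG XF]|XH] /orP[/andP[YG YF]|YH].
  + exact: AF.
  + by case/andP: (cross X Y XF XG YH).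
  + by case/andP: (cross Y X YF YG XH).
  + exact: AH.
- have d : (F :\: G) :&: H = set0.
    apply/setP => Y; rewrite !inE; apply/negbTE; apply/negP => /andP[/andP[_ YF] YH].
    by move: (disj Y YH); rewrite YF.
  have := cardsUI (F :\: G) H; rewrite d cards0 addn0 => ->.
  have := cardsID G F; rewrite (setIidPr sGF) => <-.
  by rewrite [#|G| + _]addnC leq_add2l.
Qed.

Definition R m (A B : {set 'I_m}) := (A \subset B) && (#|B| == #|A|.+1).
Definition upS m (G : {set {set 'I_m}}) := [set B | noConsec B && [exists A in G, R A B]].
Definition downS m (G : {set {set 'I_m}}) := [set A | noConsec A && [exists B in G, R A B]].

Lemma R_proper m (A B : {set 'I_m}) : R A B -> A \proper B.
Proof. by case/andP=> sAB /eqP cB; rewrite properEcard sAB cB ltnSn. Qed.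

Lemma R_add m (A B : {set 'I_m}) : R A B -> exists2 x, x \notin A & B = x |: A.
Proof.
move=> rAB; have /properP [sAB [x xB xA]] := R_proper rAB.
exists x => //; apply/eqP; rewrite eq_sym eqEcard.
move: rAB => /andP[_ /eqP ->]; rewrite cardsU1 xA add1n leqnn andbT.
by apply/subsetP => y; rewrite in_setU1 => /orP[/eqP ->|/(subsetP sAB)].
Qed.

Lemma add_R m (A : {set 'I_m}) x : x \notin A -> R A (x |: A).
Proof. by move=> xA; rewrite /R subsetUr cardsU1 xA add1n eqxx. Qed.

Lemma R_del m (A B : {set 'I_m}) : R A B -> exists2 x, x \in B & A = B :\ x.
Proof.
case/R_add => x xA ->; exists x; first exact: setU11.
by rewrite setU1K.
Qed.

Lemma del_R m (B : {set 'I_m}) x : x \in B -> R (B :\ x) B.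
Proof.
move=> xB; rewrite /R subsetDl; have := cardsD1 x B; rewrite xB add1n => ->.
by rewrite eqxx.
Qed.

Lemma up_count n (G : {set {set 'I_n.+1}}) r :
  (forall A, A \in G -> noConsec A /\ #|A| = r) -> 4 * r < n.+1 ->
  #|G| <= #|upS G|.
Proof.
move=> HG hr.
have := @dcount _ G (upS G) (@R _) (n.+1 - 3 * r) r.+1.
have h1 : forall a, a \in G -> n.+1 - 3 * r <= #|[set b in upS G | R a b]|.
  move=> a aG; have [na ca] := HG a aG.
  have := addable_lb na; rewrite ca => hl.
  apply: (@leq_trans #|addable a|); first by lia.
  rewrite -(@card_in_imset _ _ (fun x => x |: a)); last first.
    move=> x y; rewrite !inE => /andP[xa _] /andP[ya _] E.
    have : x \in y |: a by rewrite -E setU11.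
    by rewrite in_setU1 (negbTE xa) orbF => /eqP.
  apply: subset_leq_card; apply/subsetP => b /imsetP[x xA ->]; move: xA; rewrite /addable inE => /andP[xa nx].
  rewrite !inE nx add_R // andbT /=; apply/existsP; exists a; by rewrite aG add_R.
have h2 : forall b, b \in upS G -> #|[set a in G | R a b]| <= r.+1.
  move=> b; rewrite inE => /andP[nb /existsP[a0 /andP[a0G ra0]]].
  have cb : #|b| = r.+1 by move: ra0; rewrite /R => /andP[_ /eqP ->]; rewrite (proj2 (HG _ a0G)).
  rewrite -cb; apply: (leq_trans _ (leq_imset_card (fun x => b :\ x) b)).
  apply: subset_leq_card; apply/subsetP => a; rewrite inE => /andP[_ /R_del [x xb ->]].
  by apply/imsetP; exists x.
move=> /(_ h1 h2) h.
have : #|upS G| * r.+1 <= #|upS G| * (n.+1 - 3 * r) by rewrite leq_mul2l; apply/orP; right; lia.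
move: h; gen_cards; nia.
Qed.

Lemma down_count n (G : {set {set 'I_n}}) r :
  (forall A, A \in G -> noConsec A /\ #|A| = r) -> n + 2 <= 3 * r ->
  #|G| <= #|downS G|.
Proof.
move=> HG hr.
have := @dcount _ G (downS G) (fun B A => R A B) r r.
have h1 : forall b, b \in G -> r <= #|[set a in downS G | R a b]|.
  move=> b bG; have [nb cb] := HG b bG.
  rewrite -{1}cb -(@card_in_imset _ _ (fun x => b :\ x)); last first.
    move=> x y xb yb E.
    have : x \notin b :\ y by rewrite -E setD11.
    by rewrite in_setD1 xb andbT negbK => /eqP.
  apply: subset_leq_card; apply/subsetP => a /imsetP[x xb ->].
  rewrite !inE del_R // andbT (noConsec_sub (subsetDl _ _) nb) /=.
  by apply/existsP; exists b; rewrite bG del_R.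
have h2 : forall a, a \in downS G -> #|[set b in G | R a b]| <= r.
  move=> a; rewrite inE => /andP[na /existsP[b0 /andP[b0G rb0]]].
  have [nb0 cb0] := HG _ b0G.
  have [x0 x0a eb0] := R_add rb0.
  have x0X : x0 \in addable a by rewrite inE x0a -eb0 nb0.
  have ca : #|a|.+1 = r by move: rb0; rewrite /R => /andP[_ /eqP <-].
  have := addable_ub na x0X => hub.
  apply: (@leq_trans #|addable a|); last by lia.
  apply: (leq_trans _ (leq_imset_card (fun x => x |: a) _)).
  apply: subset_leq_card; apply/subsetP => b; rewrite inE => /andP[bG /R_add [x xa eb]].
  apply/imsetP; exists x => //; rewrite inE xa -eb; exact: (proj1 (HG _ bG)).
move=> /(_ h1 h2) h.
have r0 : 0 < r by lia.
by rewrite -(leq_pmul2r r0).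
Qed.

Lemma step_up n (F : {set {set 'I_n.+1}}) r :
  inQ F -> antichain F -> (forall A, A \in F -> r <= #|A|) -> 4 * r < n.+1 ->
  exists F1 : {set {set 'I_n.+1}}, [/\ inQ F1, antichain F1, #|F| <= #|F1| & forall A, A \in F1 -> r < #|A|].
Proof.
move=> QF AF HF hr.
have QF' := QF; have AF' := AF.
move/inQP: QF' => QFP; move/antichainP: AF' => AFP.
pose G := [set A in F | #|A| == r].
have sGF : G \subset F by apply/subsetP => A; rewrite inE => /andP[].
have sizeH : forall Y, Y \in upS G -> exists2 A, A \in G & R A Y /\ #|Y| = r.+1.
  move=> Y; rewrite inE => /andP[_ /existsP[A /andP[AG rAY]]]; exists A => //; split => //.
  move: AG rAY; rewrite /R inE => /andP[_ /eqP <-] /andP[_ /eqP ->] //.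
have [] := @replace _ F G (upS G) QF AF sGF.
- by apply/inQP => Y; rewrite inE => /andP[].
- apply: (@antichain_same _ _ r.+1) => Y /sizeH [A _ []] //.
- move=> X Y XF XG /sizeH [A AG [rAY cY]].
  have cX : r < #|X| by move: XG (HF X XF); rewrite inE XF /=; lia.
  apply/andP; split; apply/negP => p.
  + by move: (proper_card p); lia.
  + have := AFP A X (subsetP sGF A AG) XF.
    by rewrite (proper_trans (R_proper rAY) p).
- move=> Y /sizeH [A AG [rAY _]]; apply/negP => YF.
  by have := AFP A Y (subsetP sGF A AG) YF; rewrite R_proper.
- apply: up_count hr => A; rewrite inE => /andP[AF1 /eqP cA]; split => //; exact: QFP.
move=> Q1 A1 c1; exists ((F :\: G) :|: upS G); split => // A.
rewrite in_setU in_setD => /orP[/andP[AG AF1]|/sizeH [B _ [_ ->]] //].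
by move: AG (HF A AF1); rewrite inE AF1 /=; lia.
Qed.

Lemma step_down m (F : {set {set 'I_m}}) r :
  inQ F -> antichain F -> (forall A, A \in F -> #|A| <= r) -> m + 2 <= 3 * r ->
  exists F1 : {set {set 'I_m}}, [/\ inQ F1, antichain F1, #|F| <= #|F1| &
     forall A, A \in F1 -> #|A| < r /\ (A \in F \/ #|A|.+1 = r)].
Proof.
move=> QF AF HF hr.
have QF' := QF; have AF' := AF.
move/inQP: QF' => QFP; move/antichainP: AF' => AFP.
pose G := [set A in F | #|A| == r].
have sGF : G \subset F by apply/subsetP => A; rewrite inE => /andP[].
have sizeH : forall Y, Y \in downS G -> exists2 B, B \in G & R Y B /\ #|Y|.+1 = r.
  move=> Y; rewrite inE => /andP[_ /existsP[B /andP[BG rYB]]]; exists B => //; split => //.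
  move: BG rYB; rewrite /R inE => /andP[_ /eqP <-] /andP[_ /eqP ->] //.
have [] := @replace _ F G (downS G) QF AF sGF.
- by apply/inQP => Y; rewrite inE => /andP[].
- apply: (@antichain_same _ _ r.-1) => Y /sizeH [A _ [_ <-]] //.
- move=> X Y XF XG /sizeH [B BG [rYB cY]].
  have cX : #|X| < r by move: XG (HF X XF); rewrite inE XF /=; lia.
  apply/andP; split; apply/negP => p.
  + have := AFP X B XF (subsetP sGF B BG).
    by rewrite (proper_trans p (R_proper rYB)).
  + by move: (proper_card p); lia.
- move=> Y /sizeH [B BG [rYB _]]; apply/negP => YF.
  by have := AFP Y B YF (subsetP sGF B BG); rewrite R_proper.
- apply: down_count hr => A; rewrite inE => /andP[AF1 /eqP cA]; split => //; exact: QFP.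
move=> Q1 A1 c1; exists ((F :\: G) :|: downS G); split => // A.
rewrite in_setU in_setD => /orP[/andP[AG AF1]|/sizeH [B _ [_ E]]].
- by split; [move: AG (HF A AF1); rewrite inE AF1 /=; lia | left].
- by split; [lia | right].
Qed.

Lemma phase1 n j : forall r (F : {set {set 'I_n.+1}}), n.+1 - r <= j ->
  (forall A, A \in F -> r <= #|A|) -> inQ F -> antichain F ->
  exists F' : {set {set 'I_n.+1}}, [/\ inQ F', antichain F', #|F| <= #|F'| & forall A, A \in F' -> n.+1 <= 4 * #|A|].
Proof.
elim: j => [|j IH] r F hj HF QF AF.
  exists F; split => // A AF1; move: (HF A AF1); lia.
case: (leqP n.+1 (4 * r)) => hr.
  exists F; split => // A AF1; move: (HF A AF1); lia.
have [F1 [Q1 A1 c1 H1]] := step_up QF AF HF hr.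
have [F' [Q' A' c' H']] := IH r.+1 F1 ltac:(lia) H1 Q1 A1.
exists F'; split => //; exact: leq_trans c1 c'.
Qed.

Lemma phase2 m j : forall r (F : {set {set 'I_m}}), r <= j -> 2 <= m ->
  (forall A, A \in F -> #|A| <= r) -> (forall A, A \in F -> m <= 4 * #|A|) ->
  inQ F -> antichain F ->
  exists F' : {set {set 'I_m}}, [/\ inQ F', antichain F', #|F| <= #|F'| &
    forall A, A \in F' -> m <= 4 * #|A| /\ 3 * #|A| < m + 2].
Proof.
elim: j => [|j IH] r F hj hm HF HF4 QF AF.
  exists F; split => // A AF1; move: (HF A AF1) (HF4 A AF1); lia.
case: (ltnP (3 * r) (m + 2)) => hr.
  exists F; split => // A AF1; move: (HF A AF1) (HF4 A AF1); lia.
have [F1 [Q1 A1 c1 H1]] := step_down QF AF HF hr.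
have HF1 : forall A, A \in F1 -> #|A| <= r.-1 by move=> A /H1 [] ; lia.
have HF41 : forall A, A \in F1 -> m <= 4 * #|A|.
  by move=> A /H1 [_ [/HF4 //|]]; lia.
have [F' [Q' A' c' H']] := IH r.-1 F1 ltac:(lia) hm HF1 HF41 Q1 A1.
exists F'; split => //; exact: leq_trans c1 c'.
Qed.

Theorem mainTheorem11 (n : nat) (F : {set {set 'I_n}}) :
  2 <= n -> inQ F -> antichain F ->
  exists F' : {set {set 'I_n}}, [/\ inQ' F', antichain F' & #|F| <= #|F'|].
Proof.
case: n F => [|n] F hn QF AF; first by [].
have [F1 [Q1 A1 c1 H1]] := @phase1 n n.+1 0 F ltac:(lia) (fun A _ => leq0n _) QF AF.
have HF : forall A : {set 'I_n.+1}, A \in F1 -> #|A| <= n.+1.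
  by move=> A _; move: (max_card (mem A)); rewrite card_ord.
have [F' [Q' A' c' H']] := @phase2 n.+1 n.+1 n.+1 F1 (leqnn _) hn HF H1 Q1 A1.
exists F'; split => //; last exact: leq_trans c1 c'.
apply/forall_inP => A AF'; move/inQP: Q' => /(_ A AF') ->.
by have [] := H' A AF'; rewrite /=; lia.
Qed.
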